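(* Let $\mathbb{R}^n_s$ be $\mathbb{R}^n$ with a non-degenerate symmetric bilinear form $\langle\cdot,\cdot\rangle$ of signature $(n-s,s)$, let $G\subset\mathrm{Iso}(\mathbb{R}^n_s)$ be a real Zariski-closed subgroup whose centralizer in $\mathrm{Iso}(\mathbb{R}^n_s)$ acts transitively on $\mathbb{R}^n$, and let $\mathfrak{g}$ be its Lie algebra with the symmetric bilinear form $(\cdot,\cdot)$ induced by the orbit metric. Assume there exist $Z\in[\mathfrak{g},\mathfrak{g}]$ and $Z^*\in\mathfrak{g}$ with $(Z,Z^* )\neq0$. Then $Z^*\notin\mathfrak{z}(\mathfrak{g})$.
   Context: Elements of $\mathfrak{g}$ are written $(A,v)$ (matrices $\begin{pmatrix}A&v\\0&0\end{pmatrix}$). For fixed $p\in\mathbb{R}^n$, the orbit metric form on $\mathfrak{g}$ is $(X,Y)=\langle A_Xp+v_X,\,A_Yp+v_Y\rangle$, i.e. the pullback of $\langle\cdot,\cdot\rangle$ on the orbit $G.p$ via the orbit map; it satisfies $([X,Y],Z)=-(Y,[X,Z])$. $\mathfrak{z}(\mathfrak{g})$ denotes the center of $\mathfrak{g}$. *)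

(* Defs.v *)
From HB Require Import structures.
From mathcomp Require Import all_boot all_order all_algebra.
From mathcomp Require Import all_classical all_reals all_analysis.
Unset Printing Implicit Defensive.
Import Order.TTheory GRing.Theory Num.Theory.
Import numFieldNormedType.Exports.
Local Open Scope ring_scope.

Section Defs.
Context {R : realType}.

Definition eta_form (n s : nat) : 'M[R]_n :=
  diag_mx (\row_(i < n) (if (i < n - s)%N then 1 else -1)).

Definition ip (n s : nat) (x y : 'cV[R]_n) : R :=
  ((x^T *m eta_form n s *m y) ord0 ord0).

(* Affine maps x |-> A x + v as (n+1)x(n+1) matrices [A v; 0 1]. *)
Definition ext {n : nat} (x : 'cV[R]_n) : 'cV[R]_(n + 1) := col_mx x 1%:M.

Definition act {n : nat} (M : 'M[R]_(n + 1)) (x : 'cV[R]_n) : 'cV[R]_n :=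
  usubmx (M *m ext x).

Definition isIso (n s : nat) (M : 'M[R]_(n + 1)) : Prop :=
  [/\ dlsubmx M = 0, drsubmx M = 1%:M &
      (ulsubmx M)^T *m eta_form n s *m ulsubmx M = eta_form n s].

Inductive mxpoly_expr (m : nat) : Type :=
  | PConst of R
  | PVar of 'I_m & 'I_m
  | PAdd of mxpoly_expr m & mxpoly_expr m
  | PMul of mxpoly_expr m & mxpoly_expr m.

Fixpoint peval {m : nat} (f : mxpoly_expr m) (M : 'M[R]_m) : R :=
  match f with
  | PConst c => c
  | PVar i j => M i j
  | PAdd f g => peval f M + peval g M
  | PMul f g => peval f M * peval g M
  end.

Definition zariski_closed_subgroup (n s : nat) (G : 'M[R]_(n + 1) -> Prop) :
  Prop :=
  [/\ (forall M, G M -> isIso n s M),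
      G 1%:M,
      (forall M N, G M -> G N -> G (M *m N)),
      (forall M, G M -> G (invmx M)) &
      exists F : mxpoly_expr (n + 1) -> Prop,
        forall M, G M <-> (forall f, F f -> peval f M = 0)].

Definition centralizer_Iso (n s : nat) (G : 'M[R]_(n + 1) -> Prop)
  (h : 'M[R]_(n + 1)) : Prop :=
  isIso n s h /\ forall M, G M -> h *m M = M *m h.

Definition centralizer_transitive (n s : nat) (G : 'M[R]_(n + 1) -> Prop) :
  Prop :=
  forall x y : 'cV[R]_n, exists h, centralizer_Iso n s G h /\ act h x = y.

(* Lie algebra of a closed matrix group: tangent vectors at 1 of curves in G
   (entrywise differentiable at 0). *)
Definition lie_alg {m : nat} (G : 'M[R]_m -> Prop) (X : 'M[R]_m) : Prop :=
  exists c : R -> 'M[R]_m,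
    [/\ forall t, G (c t), c 0 = 1%:M &
        forall i j, is_derive (0 : R) (1 : R) (fun t => c t i j) (X i j)].

Definition lie_br {m : nat} (X Y : 'M[R]_m) : 'M[R]_m := X *m Y - Y *m X.

Definition derived_alg {m : nat} (g : 'M[R]_m -> Prop) (Z : 'M[R]_m) : Prop :=
  exists l : seq (R * 'M[R]_m * 'M[R]_m),
    (forall t, t \in l -> g t.1.2 /\ g t.2) /\
    Z = \sum_(t <- l) t.1.1 *: lie_br t.1.2 t.2.

Definition center_alg {m : nat} (g : 'M[R]_m -> Prop) (Z : 'M[R]_m) : Prop :=
  g Z /\ forall X, g X -> lie_br X Z = 0.

(* orbit metric form at p: (X,Y) = <A_X p + v_X, A_Y p + v_Y> *)
Definition orbit_form (n s : nat) (p : 'cV[R]_n) (X Y : 'M[R]_(n + 1)) : R :=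
  ip n s (act X p) (act Y p).

End Defs.

(* Main.v *)
Require Import Defs.
From HB Require Import structures.
From mathcomp Require Import all_boot all_order all_algebra.
From mathcomp Require Import all_classical all_reals all_analysis.
Import Order.TTheory GRing.Theory Num.Theory.
Local Open Scope ring_scope.

Set Implicit Arguments.
Section Helpers.
Context {R : realType}.

Definition mderiv {m k} (c : R -> 'M[R]_(m,k)) (W : 'M[R]_(m,k)) :=
  forall i j, is_derive (0:R) (1:R) (fun t => c t i j) (W i j).

Lemma der_uniq (f : R -> R) d1 d2 :
  is_derive (0:R) (1:R) f d1 -> is_derive (0:R) (1:R) f d2 -> d1 = d2.
Proof.
move=> h1 h2.
by rewrite -(@derive_val _ _ _ _ _ _ _ h1) (@derive_val _ _ _ _ _ _ _ h2).
Qed.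

Lemma md_uniq m k (c : R -> 'M[R]_(m,k)) C D :
  mderiv c C -> mderiv c D -> C = D.
Proof. by move=> h1 h2; apply/matrixP => i j; apply: der_uniq (h1 i j) (h2 i j). Qed.

Lemma md_eq m k (c : R -> 'M[R]_(m,k)) C D : mderiv c C -> C = D -> mderiv c D.
Proof. by move=> h <-. Qed.

Lemma md_ext m k (c d : R -> 'M[R]_(m,k)) C :
  (forall t, c t = d t) -> mderiv d C -> mderiv c C.
Proof. by move=> e h; have -> : c = d by apply: funext. Qed.

Lemma md_const m k (M : 'M[R]_(m,k)) : mderiv (fun _ => M) 0.
Proof. move=> i j; rewrite mxE; exact: is_derive_cst. Qed.

Lemma md_mul m k l (c : R -> 'M[R]_(m,k)) (d : R -> 'M[R]_(k,l)) C D :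
  mderiv c C -> mderiv d D -> mderiv (fun t => c t *m d t) (C *m d 0 + c 0 *m D).
Proof.
move=> hc hd i j.
have -> : (fun t => (c t *m d t) i j) = \sum_(k0 < k) (fun t => c t i k0 * d t k0 j).
  by apply: funext => t; rewrite mxE fct_sumE.
apply: is_derive_eq.
  apply: is_derive_sum => k0.
  exact: (is_deriveM (hc i k0) (hd k0 j)).
rewrite !mxE -big_split /=; apply: eq_bigr => k0 _.
by rewrite /GRing.scale /= addrC [C i k0 * _]mulrC.
Qed.

Lemma md_mull m k l (M : 'M[R]_(m,k)) (d : R -> 'M[R]_(k,l)) D :
  mderiv d D -> mderiv (fun t => M *m d t) (M *m D).
Proof.
move=> h; apply: md_eq (md_mul (md_const M) h) _.
by rewrite mul0mx add0r.
Qed.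

Lemma md_mulr m k l (c : R -> 'M[R]_(m,k)) (M : 'M[R]_(k,l)) C :
  mderiv c C -> mderiv (fun t => c t *m M) (C *m M).
Proof.
move=> h; apply: md_eq (md_mul h (md_const M)) _.
by rewrite mulmx0 addr0.
Qed.

Lemma md_tr m k (c : R -> 'M[R]_(m,k)) C :
  mderiv c C -> mderiv (fun t => (c t)^T) C^T.
Proof.
move=> h i j; rewrite mxE.
have -> : (fun t => (c t)^T i j) = fun t => c t j i by apply: funext => t; rewrite mxE.
exact: h.
Qed.

Lemma md_usub m1 m2 k (c : R -> 'M[R]_(m1 + m2,k)) C :
  mderiv c C -> mderiv (fun t => usubmx (c t)) (usubmx C).
Proof.
move=> h i j; rewrite mxE.
have -> : (fun t => usubmx (c t) i j) = fun t => c t (lshift m2 i) j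
  by apply: funext => t; rewrite mxE.
exact: h.
Qed.

Lemma md_dsub m1 m2 k (c : R -> 'M[R]_(m1 + m2,k)) C :
  mderiv c C -> mderiv (fun t => dsubmx (c t)) (dsubmx C).
Proof.
move=> h i j; rewrite mxE.
have -> : (fun t => dsubmx (c t) i j) = fun t => c t (rshift m1 i) j
  by apply: funext => t; rewrite mxE.
exact: h.
Qed.


Context {n : nat} (s : nat).

Definition Qf (a b : 'cV[R]_(n + 1)) : R :=
  ((usubmx a)^T *m eta_form n s *m usubmx b) ord0 ord0.

Lemma md_Q (a b : R -> 'cV[R]_(n + 1)) A B :
  mderiv a A -> mderiv b B ->
  is_derive (0:R) (1:R) (fun t => Qf (a t) (b t)) (Qf A (b 0) + Qf (a 0) B).
Proof.
move=> ha hb.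
have h := md_mul (md_mulr (eta_form n s) (md_tr (md_usub 1%N ha))) (md_usub 1%N hb).
have := h ord0 ord0.
by rewrite /Qf mxE.
Qed.

Lemma blk_mul (M : 'M[R]_(n + 1)) (u : 'cV[R]_n) (w : 'cV[R]_1) :
  M *m col_mx u w = col_mx (ulsubmx M *m u + ursubmx M *m w)
                           (dlsubmx M *m u + drsubmx M *m w).
Proof. by rewrite -{1}(submxK M) mul_block_col. Qed.

Lemma iso_bot1 (M : 'M[R]_(n + 1)) u :
  isIso n s M -> dsubmx (M *m col_mx u 1%:M) = 1%:M.
Proof. by case=> h1 h2 _; rewrite blk_mul col_mxKd h1 h2 mul0mx add0r mul1mx. Qed.

Lemma iso_bot0 (M : 'M[R]_(n + 1)) (a : 'cV[R]_(n + 1)) :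
  isIso n s M -> dsubmx a = 0 -> dsubmx (M *m a) = 0.
Proof.
case=> h1 h2 _ ha; rewrite -(vsubmxK a) ha blk_mul col_mxKd h1 mul0mx add0r.
by rewrite mulmx0.
Qed.

Lemma iso_Q (M : 'M[R]_(n + 1)) a b : isIso n s M -> dsubmx a = 0 -> dsubmx b = 0 ->
  Qf (M *m a) (M *m b) = Qf a b.
Proof.
case=> h1 h2 h3 ha hb.
rewrite -(vsubmxK a) -(vsubmxK b) ha hb /Qf !blk_mul !col_mxKu !mulmx0 !addr0.
set A := ulsubmx M; set ua := usubmx a; set ub := usubmx b.
rewrite trmx_mul.
have -> : ua^T *m A^T *m eta_form n s *m (A *m ub) =
          ua^T *m (A^T *m eta_form n s *m A) *m ub by rewrite !mulmxA.
by rewrite h3.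
Qed.

Lemma Q_lin (a : R) (u v w : 'cV[R]_(n + 1)) : Qf (a *: u + v) w = a * Qf u w + Qf v w.
Proof.
rewrite /Qf !linearD !linearZ /= ?linearD ?linearZ /= ?mulmxDl.
by rewrite -!scalemxAl !mxE.
Qed.

Lemma Q_sub (u v w : 'cV[R]_(n + 1)) : Qf (u - v) w = Qf u w - Qf v w.
Proof.
have := Q_lin (-1) v u w; rewrite scaleN1r addrC => ->; by rewrite mulN1r addrC.
Qed.

Lemma Q_0 (w : 'cV[R]_(n + 1)) : Qf 0 w = 0.
Proof. by rewrite /Qf linear0 trmx0 !mul0mx mxE. Qed.
End Helpers.
Unset Implicit Arguments.


Set Implicit Arguments.
Section Main.
Variables (R : realType) (n s : nat) (G : 'M[R]_(n + 1) -> Prop) (p : 'cV[R]_n).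
Hypothesis hiso : forall M, G M -> isIso n s M.
Let e : 'cV[R]_(n + 1) := col_mx p 1%:M.

Lemma g_bot U : lie_alg G U -> dsubmx (U *m e) = 0.
Proof.
case=> c [hG c0 hc].

have h1 := md_dsub n (md_mulr e hc).
have h2 : mderiv (fun t => dsubmx (c t *m e)) 0.
  apply: md_ext (md_const 1%:M) => t; exact: iso_bot1 (hiso (hG t)).
exact: md_uniq h1 h2.
Qed.

Lemma cent_comm h U : (forall M, G M -> h *m M = M *m h) -> lie_alg G U ->
  h *m U = U *m h.
Proof.
move=> hh [c [hG c0 hc]].
have h1 := md_mull h hc.
have h2 : mderiv (fun t => h *m c t) (U *m h).
  apply: md_ext (md_mulr h hc) => t; exact: hh.
exact: md_uniq h1 h2.
Qed.

Lemma skew U a b : lie_alg G U -> dsubmx a = 0 -> dsubmx b = 0 ->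
  Qf s (U *m a) b + Qf s a (U *m b) = 0.
Proof.
move=> [c [hG c0 hc]] ha hb.
have hd := md_Q s (md_mulr a hc) (md_mulr b hc).
rewrite c0 !mul1mx in hd.
have ef : (fun t => Qf s (c t *m a) (c t *m b)) = cst (Qf s a b).
  by apply: funext => t; rewrite iso_Q //; exact: hiso.
rewrite ef in hd.
exact: der_uniq hd (is_derive_cst _ _ _).
Qed.

Hypothesis htr : centralizer_transitive n s G.

Lemma Dlem X Y W : lie_alg G X -> lie_alg G Y -> lie_alg G W ->
  Qf s (X *m (W *m e)) (Y *m e) + Qf s (X *m e) (Y *m (W *m e)) = 0.
Proof.
move=> gX gY [c [hG c0 hc]].
have hd := md_Q s (md_mull X (md_mulr e hc)) (md_mull Y (md_mulr e hc)).
rewrite c0 !mul1mx in hd.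
have ef : (fun t => Qf s (X *m (c t *m e)) (Y *m (c t *m e))) = cst (Qf s (X *m e) (Y *m e)).
  apply: funext => t /=.
  have [h [[hI hc'] hact]] := htr p (act (c t) p).
  have he : h *m e = c t *m e.
    rewrite -(vsubmxK (h *m e)) -(vsubmxK (c t *m e)).
    rewrite /e (iso_bot1 _ hI) (iso_bot1 _ (hiso (hG t))).
    by move: hact; rewrite /act /ext => ->.
  rewrite -he !mulmxA -(cent_comm hc' gX) -(cent_comm hc' gY) -!mulmxA.
  by rewrite iso_Q // g_bot.
rewrite ef in hd.
exact: der_uniq hd (is_derive_cst _ _ _).
Qed.

Lemma bracket_zero X Y Zs : lie_alg G X -> lie_alg G Y -> center_alg (lie_alg G) Zs ->
  Qf s (lie_br X Y *m e) (Zs *m e) = 0.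
Proof.
move=> gX gY [gZ hcen].
have cX : X *m Zs = Zs *m X by apply/eqP; rewrite -subr_eq0; apply/eqP; exact: hcen.
have cY : Y *m Zs = Zs *m Y by apply/eqP; rewrite -subr_eq0; apply/eqP; exact: hcen.
have sX := skew gX (g_bot gY) (g_bot gZ).
have sY := skew gY (g_bot gX) (g_bot gZ).
have D1 := Dlem gY gZ gX.
rewrite [X *m (Zs *m e)]mulmxA cX -[Zs *m X *m e]mulmxA in sX.
rewrite /lie_br mulmxBl Q_sub -!mulmxA.
move: sX D1; set A := Qf s _ _; set B := Qf s _ _; set C := Qf s _ _.
move=> sX D1.
have -> : A = - B by apply/eqP; rewrite -addr_eq0 sX.
have -> : C = - B by apply/eqP; rewrite -addr_eq0 D1.
by rewrite subrr.
Qed.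
End Main.
Unset Implicit Arguments.


Theorem corollary4p8 (R : realType) (n s : nat) (G : 'M[R]_(n + 1) -> Prop)
  (p : 'cV[R]_n) (Z Zs : 'M[R]_(n + 1)) :
  (s <= n)%N ->
  zariski_closed_subgroup n s G ->
  centralizer_transitive n s G ->
  derived_alg (lie_alg G) Z ->
  lie_alg G Zs ->
  orbit_form n s p Z Zs != 0 ->
  ~ center_alg (lie_alg G) Zs.
Proof.
move=> _ [hiso _ _ _ _] htr [l [hl ->]] _ hne hc.
move/eqP: hne; apply.
rewrite /orbit_form /ip /act /ext.
change (Qf s ((\sum_(t <- l) t.1.1 *: lie_br t.1.2 t.2) *m col_mx p 1%:M)
  (Zs *m col_mx p 1%:M) = 0).
elim: l hl => [|t l IH] hl.
  by rewrite big_nil mul0mx; exact: (Q_0 s _).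
rewrite big_cons mulmxDl -scalemxAl Q_lin.
have [h1 h2] := hl t (mem_head _ _).
rewrite (bracket_zero p hiso htr h1 h2 hc) mulr0 add0r.
apply: IH => u hu; apply: hl; by rewrite in_cons hu orbT.
Qed.
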